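(* For every $\varepsilon>0$ there exists a connected graph $G=(V,E)$ such that the generic submodularity ratio $\gamma$ of the set function $g:2^V\to\mathbb{R}_{\ge 0}$, $g(\emptyset)=0$, $g(S)=1/f(S)$ for $S\ne\emptyset$, satisfies $\gamma<\varepsilon$. (The same holds for any positive constant multiple of $g$.)
   Context: Graphs are finite, undirected, unweighted, without self-loops, connected; $f(S)=\sum_{u\in V}\min_{s\in S}\mathrm{dist}(u,s)$ is the group farness. For a set function $g$ on $2^U$, the marginal gain is $\Delta(e\mid A)=g(A\cup\{e\})-g(A)$. For a non-negative monotone set function $g$, its generic submodularity ratio $\gamma\in[0,1]$ is the largest scalar such that $\Delta(e\mid A)\ge\gamma\,\Delta(e\mid B)$ for all $A\subseteq B\subseteq U$ and all $e\in U\setminus B$; $\gamma=1$ iff $g$ is submodular. *)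

(* Defs.v *)
From HB Require Import structures.
From mathcomp Require Import all_boot all_order all_algebra.
From mathcomp Require Import all_reals.
Set Implicit Arguments. Unset Strict Implicit. Unset Printing Implicit Defensive.
Import Order.TTheory GRing.Theory Num.Theory.

Section Graphs.
Variables (T : finType) (adj : rel T).

Definition simple_graph := symmetric adj /\ irreflexive adj.
Definition connected_graph := forall x y : T, connect adj x y.

Fixpoint walk_n (n : nat) (x y : T) : bool :=
  if n is n'.+1 then [exists z, adj x z && walk_n n' z y] else x == y.

(* shortest-path distance: least n with a walk of length n
   (returns #|T| if y is unreachable, which never happens in a connected graph) *)
Definition dist (x y : T) : nat := find (fun n => walk_n n x y) (iota 0 #|T|).

(* group farness f(S) = sum_u min_{s in S} dist(u,s) (meaningful for S nonempty) *)
Definition farness (S : {set T}) : nat :=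
  \sum_(u : T) \big[minn/#|T|]_(s in S) dist u s.

End Graphs.

Section Ratio.
Variables (R : realType) (U : finType).
Local Open Scope ring_scope.

Definition inv_farness (adj : rel U) (S : {set U}) : R :=
  if S == set0 then 0 else ((farness adj S)%:R)^-1.

Definition marg_gain (g : {set U} -> R) (e : U) (A : {set U}) : R :=
  g (e |: A) - g A.

(* gam satisfies the submodularity-ratio inequality for all A ⊆ B, e ∉ B.
   Only triples with B ∪ {e} ≠ U are considered: g(U) = 1/f(U) = 1/0 is
   undefined. *)
Definition ratio_ok (g : {set U} -> R) (gam : R) : Prop :=
  forall (A B : {set U}) (e : U),
    A \subset B -> e \notin B -> e |: B != setT ->
    gam * marg_gain g e B <= marg_gain g e A.

Definition is_subm_ratio (g : {set U} -> R) (gam : R) : Prop :=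
  [/\ 0 <= gam <= 1, ratio_ok g gam &
      forall gam', 0 <= gam' <= 1 -> ratio_ok g gam' -> gam' <= gam].

End Ratio.

(* Main.v *)
Require Import Defs.
From HB Require Import structures.
From mathcomp Require Import all_boot all_order all_algebra.
From mathcomp Require Import all_reals.
From mathcomp Require Import zify ring.
Import Order.TTheory GRing.Theory Num.Theory.
Local Open Scope ring_scope.

Section Gen.
Variables (R : realType) (U : finType).

Definition Pt (t : {set U} * {set U} * U) : bool :=
  [&& t.1.1 \subset t.1.2, t.2 \notin t.1.2 & t.2 |: t.1.2 != setT].

Lemma exists_ratio (g : {set U} -> R) (eps : R) (A0 B0 : {set U}) (e0 : U) :
  (forall (X : {set U}) (e : U), e \notin X -> e |: X != setT -> 0 < marg_gain g e X) ->
  Pt (A0, B0, e0) ->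
  marg_gain g e0 A0 / marg_gain g e0 B0 < eps ->
  exists gam, is_subm_ratio g gam /\ gam < eps.
Proof.
move=> pos P0 lt0.
pose F (t : {set U} * {set U} * U) := marg_gain g t.2 t.1.1 / marg_gain g t.2 t.1.2.
have posA : forall t, Pt t -> 0 < marg_gain g t.2 t.1.1.
  case=> [[A B] e] /and3P[/= sAB eB eBT]; apply: pos.
    by apply: contra eB; apply: (subsetP sAB).
  apply: contra eBT => /eqP eAT; apply/eqP; apply/setP=> x; rewrite in_setT.
  have: x \in e |: A by rewrite eAT in_setT.
  by rewrite !in_setU1 => /orP[->//|/(subsetP sAB) ->]; rewrite orbT.
have posB : forall t, Pt t -> 0 < marg_gain g t.2 t.1.2.
  by case=> [[A B] e] /and3P[/= _ eB eBT]; apply: pos.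
pose m := \big[Order.min/1]_(t | Pt t) F t.
have mle : forall t, Pt t -> m <= F t.
  by move=> t Pt_t; rewrite /m (bigD1 t) //= ge_min lexx.
have glb : forall x, x <= 1 -> (forall t, Pt t -> x <= F t) -> x <= m.
  move=> x x1 hx; rewrite /m; apply: (big_ind (fun y => x <= y)) => //.
  by move=> y z hy hz; rewrite le_min hy hz.
have m1 : m <= 1.
  rewrite /m; apply: (big_rec (fun y => y <= 1)) => // i y _ hy.
  by rewrite ge_min hy orbT.
have m0 : 0 <= m.
  apply: glb => // t Ptt; apply: divr_ge0; apply: ltW; [exact: posA|exact: posB].
exists m; split; last by apply: le_lt_trans (mle _ P0) lt0.
split.
- by rewrite m0 m1.
- move=> A B e sAB eB eBT.
  have Ptt : Pt (A, B, e) by rewrite /Pt /= sAB eB eBT.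
  by rewrite -ler_pdivlMr; [exact: (mle _ Ptt) | exact: (posB _ Ptt)].
- move=> gam' /andP[_ g1] hok; apply: glb => // -[[A B] e] Ptt.
  have := Ptt; case/and3P=> /= sAB eB eBT.
  rewrite /F /= ler_pdivlMr; last exact: (posB _ Ptt).
  exact: hok.
Qed.
End Gen.

Lemma bigmin_le (I : eqType) (r : seq I) (P : pred I) (F : I -> nat) i c z :
  z \in r -> P z -> (F z <= c)%N -> (\big[minn/i]_(y <- r | P y) F y <= c)%N.
Proof.
elim: r => // a r IH; rewrite inE big_cons => /orP[/eqP<-|zr] Pz Fz.
  by rewrite Pz geq_min Fz.
by case: (P a); [rewrite geq_min IH ?orbT | apply: IH].
Qed.

Lemma cardC_U1_lt (T : finType) (X : {set T}) (e : T) :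
  e \notin X -> (#|~: (e |: X)| < #|~: X|)%N.
Proof.
move=> eX; have := cardsC (e |: X); rewrite -(cardsC X) cardsU1 eX /= add1n addSn.
move=> h; rewrite -(ltn_add2l #|X|) -h; exact: ltnSn.
Qed.

Section K.
Variable k : nat.
Local Notation V := 'I_k.+3.
Definition adjK : rel V := fun x y => x != y.

Lemma simpleK : simple_graph adjK.
Proof. by split; [move=> x y; rewrite /adjK eq_sym | move=> x; rewrite /adjK eqxx]. Qed.

Lemma connK : connected_graph adjK.
Proof.
move=> x y; case: (eqVneq x y) => [->|h]; first exact: connect0.
exact: connect1.
Qed.

Lemma distK (x y : V) : dist adjK x y = (x != y).
Proof.
rewrite /dist card_ord /=.
case E: (x == y) => //=.
have -> : [exists z, adjK x z && (z == y)].
  by apply/existsP; exists y; rewrite /adjK E eqxx.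
by [].
Qed.

Lemma farK (S : {set V}) : S != set0 -> farness adjK S = #|~: S|.
Proof.
move=> /set0Pn [s0 s0S].
rewrite /farness.
have H : forall u, \big[minn/#|V|]_(s in S) dist adjK u s = (u \notin S).
  move=> u; under eq_bigr => s _ do rewrite distK.
  case: (boolP (u \in S)) => uS /=.
    by apply/eqP; rewrite -leqn0; apply: (@bigmin_le _ _ _ _ _ _ u) => //; rewrite ?mem_index_enum ?eqxx.
  apply/eqP; rewrite eqn_leq; apply/andP; split.
    apply: (@bigmin_le _ _ _ _ _ _ s0) => //; rewrite ?mem_index_enum //.
    by case: (_ != _).
  apply: (big_ind (fun y => 0 < y)%N) => //.
    by rewrite card_ord.
    by move=> a b ha hb; rewrite leq_min ha hb.
  by move=> s sS; case: eqP => // e; rewrite e sS in uS.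
under eq_bigr => u _ do rewrite H.
rewrite -sum1_card [RHS]big_mkcond /=; apply: eq_bigr => u _.
by rewrite in_setC; case: (u \in S).
Qed.

Lemma gK (R : realType) (X : {set V}) : X != set0 ->
  inv_farness R adjK X = (#|~: X|%:R)^-1.
Proof. by move=> hX; rewrite /inv_farness (negbTE hX) farK. Qed.

Lemma cardC_pos (X : {set V}) : X != setT -> (0 < #|~: X|)%N.
Proof.
move=> h; rewrite card_gt0; apply: contra h => /eqP h.
by rewrite -(setCK X) h setC0.
Qed.

Lemma posK (R : realType) (X : {set V}) (e : V) :
  e \notin X -> e |: X != setT -> 0 < marg_gain (inv_farness R adjK) e X.
Proof.
move=> eX eXT; rewrite /marg_gain.
have ne : e |: X != set0 by apply/set0Pn; exists e; rewrite setU11.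
have cp := cardC_pos _ eXT.
rewrite (gK _ _ ne) subr_gt0.
case: (eqVneq X set0) => [XE|hX].
    by rewrite XE /inv_farness eqxx invr_gt0 ltr0n -XE.
have hl := cardC_U1_lt _ _ _ eX.
rewrite (gK _ _ hX) ltf_pV2 ?posrE ?ltr0n ?ltr_nat //; last exact: ltn_trans cp hl.
Qed.
End K.

Theorem mainTheorem5 (R : realType) (eps : R) (heps : 0 < eps) :
  exists (V : finType) (adj : rel V),
    [/\ simple_graph adj, connected_graph adj,
        (exists gam : R, is_subm_ratio (inv_farness R adj) gam /\ gam < eps) &
        (forall c : R, 0 < c ->
           exists gam : R,
             is_subm_ratio (fun S => c * inv_farness R adj S) gam /\ gam < eps)].
Proof.
pose k := Num.trunc (2 / eps).
have hk : 2 / eps < k.+1%:R by apply: truncnS_gt.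
pose e0 : 'I_k.+3 := ord0.
pose e1 : 'I_k.+3 := ord_max.
pose B0 := ~: [set e0; e1].
have ne01 : e0 != e1 by [].
have P0 : Pt _ (set0, B0, e0).
  rewrite /Pt /= sub0set /B0 in_setC in_set2 eqxx /=.
  apply/negP => /eqP h.
  have : e1 \in e0 |: ~: [set e0; e1] by rewrite h in_setT.
  by rewrite in_setU1 in_setC in_set2 eqxx orbT orbF eq_sym (negbTE ne01).
have a0 : marg_gain (inv_farness R (adjK k)) e0 set0 = (k.+2%:R)^-1.
  have h1 : [set e0] != set0 by apply/set0Pn; exists e0; rewrite set11.
  rewrite /marg_gain setU0 (gK _ _ _ h1) /inv_farness eqxx subr0.
  by rewrite cardsC1 card_ord.
have b0 : marg_gain (inv_farness R (adjK k)) e0 B0 = 1 - 2^-1.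
  have hB : B0 != set0.
    by apply/set0Pn; exists (inord 1); rewrite /B0 in_setC in_set2 negb_or; apply/andP; split;
       apply/eqP => /(congr1 val) /=; rewrite inordK.
  have hB' : e0 |: B0 != set0 by apply/set0Pn; exists e0; rewrite setU11.
  rewrite /marg_gain (gK _ _ _ hB) (gK _ _ _ hB') /B0 setCK cards2 ne01.
  have -> : ~: (e0 |: ~: [set e0; e1]) = [set e1].
    apply/setP => x; rewrite in_setC in_setU1 in_setC in_set2 in_set1.
    by case: (eqVneq x e0) => [xe|xne] /=; [rewrite xe (negbTE ne01) | case: (x == e1)].
  by rewrite cards1 invr1.
have ratio : marg_gain (inv_farness R (adjK k)) e0 set0 /
             marg_gain (inv_farness R (adjK k)) e0 B0 < eps.
  rewrite a0 b0.
  have -> : (k.+2%:R : R)^-1 / (1 - 2^-1) = 2 / k.+2%:R.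
    by field; rewrite -natrD pnatr_eq0.
  rewrite ltr_pdivrMr ?ltr0n // -ltr_pdivrMl //.
  by rewrite mulrC; apply: (lt_trans hk); rewrite ltr_nat.
exists 'I_k.+3, (adjK k); split.
- exact: simpleK.
- exact: connK.
- exact: (exists_ratio _ _ _ _ _ _ _ (@posK k R) P0 ratio).
- move=> c cpos.
  have mg : forall X e, marg_gain (fun S => c * inv_farness R (adjK k) S) e X =
                        c * marg_gain (inv_farness R (adjK k)) e X.
    by move=> X e; rewrite /marg_gain mulrBr.
  apply: (exists_ratio _ _ _ _ set0 B0 e0) => //.
    by move=> X e eX eXT; rewrite mg mulr_gt0 // (@posK k R).
  rewrite !mg -mulf_div divff ?mul1r //; exact: lt0r_neq0.
Qed.
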